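(* For every CF program $\mathtt{p}$ there is a polynomial $\pi$ such that $\#\mathit{Reach}_{\mathtt{p}}(x) \le \pi(|x|)$ for all $x \in \{0,1\}^*$.
   Context: CF (''cons-free'') is a first-order, call-by-value functional language over booleans and bit lists $\{0,1\}^*$. A program is a finite sequence of mutually recursive function definitions $\mathtt{f\ x1 \dots xm = e}$ ($m\ge0$), the first being a one-argument entry function. Expressions are $\mathtt{True}$, $\mathtt{False}$, $\mathtt{[]}$, variables, base calls $\mathtt{not}$, $\mathtt{null}$, $\mathtt{head}$, $\mathtt{tail}$, conditionals $\mathtt{if\ e_0\ then\ e_1\ else\ e_2}$, and calls $\mathtt{f\ e_1\dots e_m}$ of defined functions; there are no list constructors. Semantics is standard big-step call-by-value evaluation: a call evaluates its arguments to values $w_i$ and then evaluates the body of $\mathtt{f}$ in the environment $\rho=[\mathtt{x1}\mapsto w_1,\dots,\mathtt{xm}\mapsto w_m]$; the program on input $x$ starts by evaluating the entry body in $[\mathtt{x}\mapsto x]$. $\mathit{Reach}_{\mathtt{p}}(x)$ is the set of pairs $(\mathtt{f},\rho)$ such that the body of the defined function $\mathtt{f}$ is called at least once with environment $\rho$ during the computation of $\mathtt{p}$ on input $x$; $\#$ denotes cardinality. *)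

(* Defs.v *)
From Stdlib Require Import List ZArith.
Import ListNotations.

(* Values: booleans and bit lists ({0,1}^* as list bool, 0 = false, 1 = true). *)
Inductive value : Type :=
| VB (b : bool)
| VL (l : list bool).

(* Expressions. Variables are de Bruijn-style indices into the environment
   (EVar i denotes x(i+1)); defined functions are indices into the program. *)
Inductive expr : Type :=
| ETrue | EFalse | ENil
| EVar (i : nat)
| ENot (e : expr) | ENull (e : expr) | EHead (e : expr) | ETail (e : expr)
| EIf (e0 e1 e2 : expr)
| ECall (f : nat) (es : list expr).

(* A program: list of definitions (arity m, body); the first is the entry. *)
Definition program := list (nat * expr).
Definition env := list value.

Inductive wf_expr (p : program) (m : nat) : expr -> Prop :=
| wf_True : wf_expr p m ETrue
| wf_False : wf_expr p m EFalse
| wf_Nil : wf_expr p m ENil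
| wf_Var i : i < m -> wf_expr p m (EVar i)
| wf_Not e : wf_expr p m e -> wf_expr p m (ENot e)
| wf_Null e : wf_expr p m e -> wf_expr p m (ENull e)
| wf_Head e : wf_expr p m e -> wf_expr p m (EHead e)
| wf_Tail e : wf_expr p m e -> wf_expr p m (ETail e)
| wf_If e0 e1 e2 : wf_expr p m e0 -> wf_expr p m e1 -> wf_expr p m e2 ->
    wf_expr p m (EIf e0 e1 e2)
| wf_Call f es k body : nth_error p f = Some (k, body) -> length es = k ->
    (forall e, In e es -> wf_expr p m e) -> wf_expr p m (ECall f es).

Definition wf_program (p : program) : Prop :=
  (exists body, nth_error p 0 = Some (1, body)) /\
  (forall m body, In (m, body) p -> wf_expr p m body).

(* Big-step call-by-value evaluation (head/tail of [] have no value). *)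
Inductive eval (p : program) (rho : env) : expr -> value -> Prop :=
| ev_True : eval p rho ETrue (VB true)
| ev_False : eval p rho EFalse (VB false)
| ev_Nil : eval p rho ENil (VL [])
| ev_Var i v : nth_error rho i = Some v -> eval p rho (EVar i) v
| ev_Not e b : eval p rho e (VB b) -> eval p rho (ENot e) (VB (negb b))
| ev_Null e l : eval p rho e (VL l) ->
    eval p rho (ENull e) (VB (match l with [] => true | _ => false end))
| ev_Head e b l : eval p rho e (VL (b :: l)) -> eval p rho (EHead e) (VB b)
| ev_Tail e b l : eval p rho e (VL (b :: l)) -> eval p rho (ETail e) (VL l)
| ev_IfT e0 e1 e2 v : eval p rho e0 (VB true) -> eval p rho e1 v ->
    eval p rho (EIf e0 e1 e2) v
| ev_IfF e0 e1 e2 v : eval p rho e0 (VB false) -> eval p rho e2 v ->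
    eval p rho (EIf e0 e1 e2) v
| ev_Call f es ws m body v : evals p rho es ws ->
    nth_error p f = Some (m, body) -> length ws = m ->
    eval p ws body v -> eval p rho (ECall f es) v
with evals (p : program) (rho : env) : list expr -> list value -> Prop :=
| evs_nil : evals p rho [] []
| evs_cons e es w ws : eval p rho e w -> evals p rho es ws ->
    evals p rho (e :: es) (w :: ws).

(* reach p rho e (g, sigma): during the (possibly non-terminating) evaluation of
   e in environment rho, the body of g is called with environment sigma.
   Arguments are evaluated left to right. *)
Inductive reach (p : program) (rho : env) : expr -> nat * env -> Prop :=
| r_Not e c : reach p rho e c -> reach p rho (ENot e) c
| r_Null e c : reach p rho e c -> reach p rho (ENull e) c
| r_Head e c : reach p rho e c -> reach p rho (EHead e) c
| r_Tail e c : reach p rho e c -> reach p rho (ETail e) c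
| r_If0 e0 e1 e2 c : reach p rho e0 c -> reach p rho (EIf e0 e1 e2) c
| r_If1 e0 e1 e2 c : eval p rho e0 (VB true) -> reach p rho e1 c ->
    reach p rho (EIf e0 e1 e2) c
| r_If2 e0 e1 e2 c : eval p rho e0 (VB false) -> reach p rho e2 c ->
    reach p rho (EIf e0 e1 e2) c
| r_CallArg f es c : reach_args p rho es c -> reach p rho (ECall f es) c
| r_CallHere f es ws m body : evals p rho es ws ->
    nth_error p f = Some (m, body) -> length ws = m ->
    reach p rho (ECall f es) (f, ws)
| r_CallBody f es ws m body c : evals p rho es ws ->
    nth_error p f = Some (m, body) -> length ws = m ->
    reach p ws body c -> reach p rho (ECall f es) c
with reach_args (p : program) (rho : env) : list expr -> nat * env -> Prop :=
| ra_head e es c : reach p rho e c -> reach_args p rho (e :: es) c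
| ra_tail e es w c : eval p rho e w -> reach_args p rho es c ->
    reach_args p rho (e :: es) c.

(* Reach_p(x): pairs (f, rho) such that the body of f is called with rho in the
   computation of p on input x (the initial call of the entry body included). *)
Definition Reach (p : program) (x : list bool) (c : nat * env) : Prop :=
  exists body, nth_error p 0 = Some (1, body) /\
    (c = (0, [VL x]) \/ reach p [VL x] body c).

(* Polynomials with integer coefficients (constant term first), Horner. *)
Fixpoint peval (cs : list Z) (n : Z) : Z :=
  match cs with
  | [] => 0%Z
  | a :: cs' => (a + n * peval cs' n)%Z
  end.

(* Main.v *)
Require Import Defs.
From Stdlib Require Import List ZArith Lia.
Import ListNotations.

Fixpoint suffs (l : list bool) : list (list bool) :=
  l :: match l with [] => [] | _ :: t => suffs t end.

Lemma suffs_len l : length (suffs l) = S (length l).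
Proof. induction l; simpl; auto. Qed.

Lemma suffs_self l : In l (suffs l).
Proof. destruct l; simpl; auto. Qed.

Lemma suffs_incl x : forall l, In l (suffs x) -> incl (suffs l) (suffs x).
Proof.
  induction x as [|a x IH]; simpl; intros l H.
  - destruct H as [<-|[]]. simpl. apply incl_refl.
  - destruct H as [<-|H]. apply incl_refl.
    apply incl_tl. now apply IH.
Qed.

Lemma suffs_nil x : In [] (suffs x).
Proof. induction x; simpl; auto. Qed.

Definition V (x : list bool) : list value :=
  VB true :: VB false :: map VL (suffs x).

Definition good x v := In v (V x).

Lemma good_tail x b l : good x (VL (b :: l)) -> good x (VL l).
Proof.
  unfold good, V; simpl. intros [H|[H|H]]; try discriminate.
  apply in_map_iff in H. destruct H as [l' [E H]]. injection E as ->.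
  right; right. apply in_map. apply (suffs_incl _ _ H). simpl. right. apply suffs_self.
Qed.

Scheme eval_mut := Induction for eval Sort Prop
with evals_mut := Induction for evals Sort Prop.
Scheme reach_mut := Induction for reach Sort Prop
with reach_args_mut := Induction for reach_args Sort Prop.

Lemma eval_good p x : forall rho e v, eval p rho e v -> Forall (good x) rho -> good x v.
Proof.
  apply (eval_mut p (fun rho e v _ => Forall (good x) rho -> good x v)
                  (fun rho es ws _ => Forall (good x) rho -> Forall (good x) ws));
  intros; auto; try (unfold good, V; simpl; auto; fail).
  - unfold good, V; simpl. right; right. apply in_map, suffs_nil.
  - apply nth_error_In in e. rewrite Forall_forall in H. auto.
  - unfold good, V; destruct b; simpl; auto.
  - unfold good, V; destruct l; simpl; auto.
  - unfold good, V; destruct b; simpl; auto.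
  - apply (good_tail x b l). auto.
Qed.

Lemma evals_good p x : forall rho es ws, evals p rho es ws -> Forall (good x) rho -> Forall (good x) ws.
Proof.
  induction 1; intros; constructor; eauto using eval_good.
Qed.

Definition goodcfg (p : program) x (c : nat * env) :=
  exists m b, nth_error p (fst c) = Some (m, b) /\ length (snd c) = m /\ Forall (good x) (snd c).

Lemma reach_good p x : forall rho e c, reach p rho e c -> Forall (good x) rho -> goodcfg p x c.
Proof.
  apply (reach_mut p (fun rho e c _ => Forall (good x) rho -> goodcfg p x c)
                  (fun rho es c _ => Forall (good x) rho -> goodcfg p x c));
  intros; auto.
  - exists m, body. simpl. repeat split; auto. eapply evals_good; eauto.
  - apply H. eapply evals_good; eauto.
Qed.

Fixpoint envs (Vs : list value) (k : nat) : list env :=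
  match k with
  | 0 => [[]]
  | S k => flat_map (fun v => map (cons v) (envs Vs k)) Vs
  end.

Lemma fm_len {A : Type} (Vs : list A) (E : list (list A)) :
  length (flat_map (fun v => map (cons v) E) Vs) = length Vs * length E.
Proof.
  induction Vs; simpl; auto. rewrite length_app, length_map, IHVs. lia.
Qed.

Lemma envs_len Vs k : length (envs Vs k) = length Vs ^ k.
Proof.
  induction k; simpl; auto.
  rewrite <- IHk. exact (fm_len Vs (envs Vs k)).
Qed.

Lemma envs_in Vs : forall ws, Forall (fun v => In v Vs) ws -> In ws (envs Vs (length ws)).
Proof.
  induction 1; simpl; auto.
  apply in_flat_map. exists x; split; auto. apply in_map; auto.
Qed.

Fixpoint cfgs (Vs : list value) (i : nat) (ds : program) : list (nat * env) :=
  match ds with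
  | [] => []
  | (m, _) :: ds' => map (pair i) (envs Vs m) ++ cfgs Vs (S i) ds'
  end.

Lemma cfgs_in Vs ds : forall i j m b ws, nth_error ds j = Some (m, b) ->
  length ws = m -> Forall (fun v => In v Vs) ws -> In (i + j, ws) (cfgs Vs i ds).
Proof.
  induction ds as [|[m0 b0] ds IH]; intros i j m b ws E L F; destruct j; simpl in *; try discriminate.
  - injection E as -> ->. apply in_or_app; left. rewrite Nat.add_0_r. apply in_map. subst. now apply envs_in.
  - apply in_or_app; right. replace (i + S j) with (S i + j) by lia. eauto.
Qed.

Fixpoint padd (a b : list Z) : list Z :=
  match a, b with
  | [], b => b
  | a, [] => a
  | x :: a', y :: b' => (x + y)%Z :: padd a' b'
  end.

Lemma padd_ok a : forall b n, peval (padd a b) n = (peval a n + peval b n)%Z.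
Proof.
  induction a; intros [|y b] n; simpl; try ring. rewrite IHa. ring.
Qed.

Definition pscale (c : Z) (a : list Z) := map (Z.mul c) a.

Lemma pscale_ok c a n : peval (pscale c a) n = (c * peval a n)%Z.
Proof. induction a; simpl; try ring. rewrite IHa. ring. Qed.

Fixpoint q (k : nat) : list Z :=
  match k with
  | 0 => [1%Z]
  | S k => padd (pscale 3 (q k)) (0%Z :: q k)
  end.

Lemma q_ok k n : peval (q k) (Z.of_nat n) = Z.of_nat ((n + 3) ^ k).
Proof.
  induction k as [|k IHk].
  - cbn [q peval]. rewrite Nat.pow_0_r. lia.
  - cbn [q]. rewrite padd_ok, pscale_ok. cbn [peval]. rewrite IHk.
    rewrite Nat.pow_succ_r', Nat2Z.inj_mul, Nat2Z.inj_add. lia.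
Qed.

Definition pi_of (p : program) : list Z :=
  fold_right (fun d acc => padd (q (fst d)) acc) [] p.

Lemma cfgs_len x p : forall i,
  Z.of_nat (length (cfgs (V x) i p)) = peval (pi_of p) (Z.of_nat (length x)).
Proof.
  induction p as [|[m b] p IH]; intros i; simpl; auto.
  rewrite length_app, length_map, envs_len, padd_ok, q_ok, <- (IH (S i)).
  rewrite Nat2Z.inj_add. replace (length (V x)) with (length x + 3) by (unfold V; cbn [length]; rewrite length_map, suffs_len; lia). reflexivity.
Qed.

Theorem lemma3 : forall p : program, wf_program p ->
  exists pi : list Z, forall (x : list bool) (L : list (nat * env)),
    NoDup L -> (forall c, In c L -> Reach p x c) ->
    (Z.of_nat (length L) <= peval pi (Z.of_nat (length x)))%Z.
Proof.
  intros p _. exists (pi_of p). intros x L ND HL.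
  rewrite <- (cfgs_len x p 0).
  apply Nat2Z.inj_le. apply NoDup_incl_length; auto.
  intros [f ws] Hc. apply HL in Hc. destruct Hc as [body [E [Ec|R]]].
  - injection Ec as -> ->. apply (cfgs_in _ _ 0 0 1 body); auto.
    constructor; [|constructor]. unfold V; simpl. right; right. apply in_map, suffs_self.
  - assert (G : goodcfg p x (f, ws)).
    { eapply reach_good; eauto. constructor; [|constructor].
      unfold good, V; simpl. right; right. apply in_map, suffs_self. }
    destruct G as [m [b [G1 [G2 G3]]]]. simpl in *.
    apply (cfgs_in _ _ 0 f m b); auto.
Qed.
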